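(* The binary (i.e., $2$-ary) unbiased black-box complexity of the $\mathrm{DLB}$ problem is $O(n\log n)$.
   Context: Let $n$ be an even positive integer. For $x\in\{0,1\}^n$ consider the blocks $(x_{2\ell+1},x_{2\ell+2})$, $\ell=0,\dots,\frac n2-1$. If $x\neq(1,\dots,1)$, let $m$ be the smallest $\ell$ with $x_{2\ell+1}\neq 1$ or $x_{2\ell+2}\neq 1$, and define $\mathrm{DLB}(x)=2m+1$ if $x_{2m+1}+x_{2m+2}=0$ and $\mathrm{DLB}(x)=2m$ if $x_{2m+1}+x_{2m+2}=1$; set $\mathrm{DLB}(1,\dots,1)=n$. The $\mathrm{DLB}$ problem is to maximize $\mathrm{DLB}$. A $k$-ary variation operator $V$ assigns to each $k$-tuple $(x^1,\dots,x^k)$ of bit strings a probability distribution on $\{0,1\}^n$; it is unbiased if for all $x^1,\dots,x^k,y,z\in\{0,1\}^n$, $\Pr[y=V(x^1,\dots,x^k)]=\Pr[y\oplus z=V(x^1\oplus z,\dots,x^k\oplus z)]$, and for all permutations $\sigma$ of $[1..n]$, $\Pr[y=V(x^1,\dots,x^k)]=\Pr[\sigma(y)=V(\sigma(x^1),\dots,\sigma(x^k))]$, where $\sigma(x)=(x_{\sigma(1)},\dots,x_{\sigma(n)})$. A $k$-ary unbiased black-box algorithm generates $x^{(0)}$ uniformly at random; for $t=1,2,\dots$, based solely on $(f(x^{(0)}),\dots,f(x^{(t-1)}))$, it chooses a $k$-ary unbiased variation operator $V$ and indices $i_1,\dots,i_k\in[0..t-1]$ and samples $x^{(t)}\sim V(x^{(i_1)},\dots,x^{(i_k)})$;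 each search point is evaluated when generated. The runtime is the number of fitness evaluations until (and including) the first evaluation of an optimum. The $k$-ary unbiased black-box complexity of $\mathrm{DLB}$ is the infimum over all $k$-ary unbiased black-box algorithms of the expected runtime on $\mathrm{DLB}$. *)

(* Defs.v *)
From HB Require Import structures.
From mathcomp Require Import all_boot all_order all_algebra all_fingroup.
From mathcomp Require Import all_classical all_reals all_analysis.
Set Implicit Arguments. Unset Strict Implicit. Unset Printing Implicit Defensive.
Import Order.TTheory GRing.Theory Num.Theory.
Local Open Scope ring_scope.

Definition bits (n : nat) := {ffun 'I_n -> bool}.

(* the bit at 0-indexed position i (false if out of range) *)
Definition bitn (n : nat) (x : bits n) (i : nat) : bool :=
  nth false [seq x j | j <- enum 'I_n] i.

(* index m of the first block (x_{2m+1},x_{2m+2}) (1-indexed positions)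
   that is not (1,1); equals n/2 if there is none. *)
Definition first_bad_block (n : nat) (x : bits n) : nat :=
  find (fun l => ~~ (bitn x l.*2 && bitn x l.*2.+1)) (iota 0 n./2).

Definition DLB (n : nat) (x : bits n) : nat :=
  let m := first_bad_block x in
  if m == n./2 then n
  else if ~~ bitn x m.*2 && ~~ bitn x m.*2.+1 then m.*2.+1 else m.*2.

Definition is_opt (n : nat) (x : bits n) : bool := [forall y : bits n, DLB y <= DLB x]%N.

Definition bxor (n : nat) (x z : bits n) : bits n := [ffun i => x i (+) z i].
Definition bperm (n : nat) (s : {perm 'I_n}) (x : bits n) : bits n :=
  [ffun i => x (s i)].

(* k-ary variation operator: V xs y = Pr[y = V(x^1,...,x^k)] *)
Definition var_op (R : realType) (n k : nat) :=
  {ffun 'I_k -> bits n} -> bits n -> R.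

Definition is_distr_op (R : realType) (n k : nat) (V : var_op R n k) : Prop :=
  forall xs, (forall y, 0 <= V xs y) /\ \sum_(y : bits n) V xs y = 1.

Definition unbiased_op (R : realType) (n k : nat) (V : var_op R n k) : Prop :=
  (forall xs y z, V xs y = V [ffun j => bxor (xs j) z] (bxor y z)) /\
  (forall xs y (s : {perm 'I_n}),
      V xs y = V [ffun j => bperm s (xs j)] (bperm s y)).

(* An algorithm: given the fitness history (f(x^(0)),...,f(x^(t-1))),
   it chooses an operator and k indices in [0..t-1]. *)
Definition algo (R : realType) (n k : nat) :=
  seq nat -> var_op R n k * ('I_k -> nat).

Definition unbiased_algo (R : realType) (n k : nat) (A : algo R n k) : Prop :=
  forall h : seq nat,
    is_distr_op (A h).1 /\ unbiased_op (A h).1 /\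
    (0 < size h -> forall j, (A h).2 j < size h)%N.

(* probability that, sampling x^(t) from the operator chosen after the
   history pre = (x^(0),...,x^(t-1)), we get y *)
Definition step_prob (R : realType) (n k : nat) (A : algo R n k)
    (pre : seq (bits n)) (y : bits n) : R :=
  let c := A [seq DLB x | x <- pre] in
  c.1 [ffun j => nth y pre (c.2 j)] y.

(* probability that the first size xs search points are exactly xs *)
Definition hist_prob (R : realType) (n k : nat) (A : algo R n k)
    (xs : seq (bits n)) : R :=
  match xs with
  | [::] => 1
  | x0 :: _ => (2 ^+ n)^-1 *
      \prod_(1 <= s < size xs) step_prob A (take s xs) (nth x0 xs s)
  end.

(* Pr[T > t]: none of x^(0),...,x^(t) is an optimum *)
Definition prob_runtime_gt (R : realType) (n k : nat) (A : algo R n k)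
    (t : nat) : R :=
  \sum_(xs : (t.+1).-tuple (bits n) | all (fun x => ~~ is_opt x) xs)
     hist_prob A xs.

(* E[T] = sum_{t >= 0} Pr[T > t], in the extended reals *)
Definition expected_runtime (R : realType) (n k : nat) (A : algo R n k)
    : \bar R :=
  (\sum_(0 <= t <oo) (prob_runtime_gt A t)%:E)%E.

Definition unbiased_bbc (R : realType) (n k : nat) : \bar R :=
  ereal_inf [set expected_runtime A | A in [set A : algo R n k | unbiased_algo A]].

(* Main.v *)
Require Import Defs.
From HB Require Import structures.
From mathcomp Require Import all_boot all_order all_algebra all_fingroup.
From mathcomp Require Import all_classical all_reals all_analysis.
From mathcomp Require Import zify ring lra.
Import Order.TTheory GRing.Theory Num.Theory.

Lemma halfup_bounds e : e <= ((e.+1)./2).*2 <= e.+1.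
Proof.
have h := odd_double_half e.+1; rewrite -!muln2 in h *.
case: (odd _) h => /= h; apply/andP; split; lia.
Qed.

Lemma binom_bound e z : 1 <= z <= 2 -> z < e ->
  'C(e, (e.+1)./2) <= 8 * 'C(e - 2, (e.+1)./2 - z).
Proof.
move=> /andP[z1 z2] ze.
set k := (e.+1)./2.
have /andP[hk1 hk2] := halfup_bounds e; rewrite -/k -muln2 in hk1 hk2.
have k1 : 1 <= k by lia.
have E1 : k * 'C(e, k) = e * 'C(e.-1, k.-1).
  by rewrite (mul_bin_diag e k.-1) prednK.
case: (ltnP z 2) => hz.
- have -> : z = 1 by lia.
  have ek : 1 <= e - k by lia.
  have E2 : e.-1 * 'C(e.-1.-1, k.-1) = (e.-1 - k.-1) * 'C(e.-1, k.-1).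
    by rewrite mul_bin_down.
  have E3 : k * (e - k) * 'C(e, k) = e * e.-1 * 'C(e - 2, k - 1).
    rewrite (mulnC k) -mulnA E1 mulnCA -mulnA.
    have -> : e - 2 = e.-1.-1 by lia.
    have -> : k - 1 = k.-1 by lia.
    rewrite E2; congr (_ * (_ * _)); lia.
  have pos : 0 < k * (e - k) by rewrite muln_gt0; apply/andP; split; lia.
  rewrite -(leq_pmul2l pos) E3 mulnA (mulnC _ 8) -mulnA mulnA.
  apply: leq_mul => //; nia.
- have -> : z = 2 by lia.
  have k2 : 2 <= k by lia.
  have E2 : e.-1 * 'C(e.-1.-1, k.-2) = k.-1 * 'C(e.-1, k.-1).
    by rewrite (mul_bin_diag e.-1 k.-2) prednK //; lia.
  have E3 : k * k.-1 * 'C(e, k) = e * e.-1 * 'C(e - 2, k - 2).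
    rewrite (mulnC k) -mulnA E1 mulnCA -E2.
    have -> : e - 2 = e.-1.-1 by lia.
    have -> : k - 2 = k.-2 by lia.
    by rewrite mulnA.
  have pos : 0 < k * k.-1 by rewrite muln_gt0; apply/andP; split; lia.
  rewrite -(leq_pmul2l pos) E3 mulnA (mulnC _ 8) -mulnA mulnA.
  apply: leq_mul => //; nia.
Qed.

Set Implicit Arguments. Unset Strict Implicit. Unset Printing Implicit Defensive.

Section Bits.
Variable n : nat.
Implicit Types x y : bits n.

Lemma bitnE x (i : 'I_n) : bitn x i = x i.
Proof.
rewrite /bitn (nth_map i) ?size_enum_ord ?ltn_ord //.
by rewrite nth_ord_enum.
Qed.

Lemma bitn_oob x i : (n <= i)%N -> bitn x i = false.
Proof. by move=> h; rewrite /bitn nth_default // size_map size_enum_ord. Qed.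

Lemma bitnP x i : bitn x i -> (i < n)%N.
Proof. by case: (ltnP i n) => // /(bitn_oob x) ->. Qed.

Definition good x l := bitn x l.*2 && bitn x l.*2.+1.

Lemma fbb_le x : (first_bad_block x <= n./2)%N.
Proof. by rewrite /first_bad_block; have := find_size (fun l => ~~ (bitn x l.*2 && bitn x l.*2.+1)) (iota 0 n./2); rewrite size_iota. Qed.

Lemma fbb_good x l : (l < first_bad_block x)%N -> good x l.
Proof.
move=> hl; have := before_find 0%N hl.
have hl2 : (l < n./2)%N by apply: leq_trans hl (fbb_le x).
rewrite nth_iota // add0n. by move/negPn.
Qed.

Lemma fbb_bad x : (first_bad_block x < n./2)%N -> ~~ good x (first_bad_block x).
Proof.
move=> h; have hh : has (fun l => ~~ (bitn x l.*2 && bitn x l.*2.+1)) (iota 0 n./2).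
  by rewrite has_find size_iota.
by have := nth_find 0%N hh; rewrite nth_iota // add0n.
Qed.

Lemma fbb_ge x l : (l <= n./2)%N -> (forall j, (j < l)%N -> good x j) ->
  (l <= first_bad_block x)%N.
Proof.
move=> hl hg; case: (leqP l (first_bad_block x)) => // hlt.
have h1 : (first_bad_block x < n./2)%N by apply: leq_trans hlt hl.
by have := fbb_bad h1; rewrite hg.
Qed.

Hypothesis n_even : ~~ odd n.

Lemma n_half : (n./2).*2 = n.
Proof. by rewrite -{2}(odd_double_half n) (negbTE n_even). Qed.

Lemma DLB_half x : (DLB x)./2 = first_bad_block x.
Proof.
rewrite /DLB; case: eqP => [->|_]; first by rewrite -{1}n_half doubleK.
case: ifP => _; last by rewrite doubleK.
by rewrite -addn1 halfD odd_double doubleK /= addn0.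
Qed.

Lemma DLB_le_n x : (DLB x <= n)%N.
Proof.
have := fbb_le x; rewrite /DLB; case: eqP => // hne h.
have h2 := n_half.
have h3 : (first_bad_block x < n./2)%N by rewrite ltn_neqAle h andbT; apply/eqP.
case: ifP => _; lia.
Qed.

Lemma DLB_odd x : (first_bad_block x < n./2)%N ->
  odd (DLB x) = ~~ bitn x (first_bad_block x).*2 && ~~ bitn x (first_bad_block x).*2.+1.
Proof.
move=> h; rewrite /DLB; have -> : (first_bad_block x == n./2) = false.
  by apply/eqP => e; rewrite e ltnn in h.
by case: ifP => hb /=; rewrite ?odd_double //= hb.
Qed.

Lemma good_all x l : (l < n./2)%N -> (forall i : 'I_n, x i) -> good x l.
Proof.
move=> hl ha; have h2 := n_half.
have i1 : (l.*2 < n)%N by lia.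
have i2 : (l.*2.+1 < n)%N by lia.
rewrite /good; have -> : bitn x l.*2 = bitn x (Ordinal i1) by [].
have -> : bitn x l.*2.+1 = bitn x (Ordinal i2) by [].
by rewrite !bitnE !ha.
Qed.

Lemma fbb_all x : (forall i : 'I_n, x i) -> first_bad_block x = n./2.
Proof.
move=> ha; apply/eqP; rewrite eqn_leq fbb_le /=.
by apply: fbb_ge => // j hj; apply: good_all.
Qed.

Lemma DLB_all x : (forall i : 'I_n, x i) -> DLB x = n.
Proof. by move=> ha; rewrite /DLB fbb_all // eqxx. Qed.

Lemma fbb_lt_exists x (i : 'I_n) : ~~ x i -> (first_bad_block x < n./2)%N.
Proof.
move=> hi; case: (ltnP (first_bad_block x) n./2) => // h.
have hl : (i./2 < first_bad_block x)%N.
  have := ltn_ord i; have := n_half; have := odd_double_half i; lia.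
have := fbb_good hl; rewrite /good => /andP[h1 h2].
have hx : bitn x i = false by rewrite bitnE (negbTE hi).
have := odd_double_half i; case: (odd i) => /= e.
  have e' : (i./2).*2.+1 = i by rewrite -[X in _ = X]e.
  by move: h2; rewrite e' hx.
have e' : (i./2).*2 = i by rewrite -[X in _ = X]e.
by move: h1; rewrite e' hx.
Qed.

Lemma DLB_lt_n x (i : 'I_n) : ~~ x i -> (DLB x < n)%N.
Proof.
move=> hi; have h := fbb_lt_exists hi; have h2 := n_half.
rewrite /DLB; have -> : (first_bad_block x == n./2) = false.
  by apply/eqP => e; rewrite e ltnn in h.
case: ifP => _; lia.
Qed.

Lemma is_optE x : is_opt x = [forall i, x i].
Proof.
apply/idP/idP.
- move=> /forallP ho; apply/forallP => i; apply/negPn/negP => hi.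
  have := ho [ffun _ => true]; rewrite DLB_all; last by move=> j; rewrite ffunE.
  by have := DLB_lt_n hi; rewrite ltnNge => /negbTE ->.
- move=> hh; have ha : forall j, x j by move=> j; exact: (forallP hh j).
  rewrite /is_opt; apply/forallP => y; rewrite (DLB_all ha); exact: DLB_le_n.
Qed.

End Bits.

Section Ops.
Variable n : nat.
Implicit Types x y z : bits n.

Definition dset x y : {set 'I_n} := [set i | x i != y i].
Definition flipset x (G : {set 'I_n}) : bits n := [ffun i => x i (+) (i \in G)].

Lemma dset_flip x G : dset x (flipset x G) = G.
Proof. by apply/setP => i; rewrite !inE ffunE; case: (x i); case: (i \in G). Qed.

Lemma flip_dset x y : flipset x (dset x y) = y.
Proof. by apply/ffunP => i; rewrite ffunE inE; case: (x i); case: (y i). Qed.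

Lemma flipset_inj x : injective (flipset x).
Proof. by move=> G1 G2 e; rewrite -(dset_flip x G1) e dset_flip. Qed.

Lemma dset_inj x : injective (dset x).
Proof. by move=> y1 y2 e; rewrite -(flip_dset x y1) e flip_dset. Qed.

Lemma card_dset x (P : pred {set 'I_n}) :
  #|[set y | P (dset x y)]| = #|[set G | P G]|.
Proof.
have -> : [set y | P (dset x y)] = flipset x @: [set G | P G].
  apply/setP => y; rewrite inE; apply/idP/imsetP.
  - by move=> h; exists (dset x y); rewrite ?inE ?flip_dset.
  - by case=> G; rewrite inE => hG ->; rewrite dset_flip.
by rewrite card_imset //; apply: flipset_inj.
Qed.

Lemma dset_xor x y z : dset (bxor x z) (bxor y z) = dset x y.
Proof.
by apply/setP => i; rewrite !inE !ffunE; case: (x i); case: (y i); case: (z i).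
Qed.

Lemma dset_perm (s : {perm 'I_n}) x y :
  dset (bperm s x) (bperm s y) = s @^-1: dset x y.
Proof. by apply/setP => i; rewrite !inE !ffunE. Qed.

Lemma preim_perm_subset (s : {perm 'I_n}) (A B : {set 'I_n}) :
  (s @^-1: A \subset s @^-1: B) = (A \subset B).
Proof.
apply/fintype.subsetP/fintype.subsetP => h i.
- move=> hi; have := h (s^-1 i)%g; rewrite !inE permKV; exact.
- by rewrite !inE; apply: h.
Qed.

Lemma card_preim_perm (s : {perm 'I_n}) (A : {set 'I_n}) : #|s @^-1: A| = #|A|.
Proof. by apply: card_preimset; apply: perm_inj. Qed.

Lemma bperm_inj (s : {perm 'I_n}) : injective (bperm s).
Proof.
move=> x y e; apply/ffunP => i.
have := congr1 (fun f : bits n => f (s^-1 i)%g) e; rewrite /= !ffunE permKV; exact.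
Qed.

Lemma bxor_inj z : injective (fun x : bits n => bxor x z).
Proof.
move=> x y e; apply/ffunP => i.
have := congr1 (fun f : bits n => f i) e; rewrite /= !ffunE.
by case: (x i); case: (y i); case: (z i).
Qed.

Definition compl x : bits n := [ffun i => ~~ x i].

Lemma compl_xor x z : compl (bxor x z) = bxor (compl x) z.
Proof. by apply/ffunP => i; rewrite !ffunE; case: (x i); case: (z i). Qed.

Lemma compl_perm (s : {perm 'I_n}) x : compl (bperm s x) = bperm s (compl x).
Proof. by apply/ffunP => i; rewrite !ffunE. Qed.

Variable R : realType.
Local Open Scope ring_scope.

Definition op_compl : var_op R n 2 :=
  fun xs y => if y == compl (xs ord0) then 1 else 0.

Definition halfup (e : nat) : nat := (e.+1)./2.

Definition op_half : var_op R n 2 :=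
  fun xs y =>
    let D := dset (xs ord0) (xs ord_max) in
    if (dset (xs ord0) y \subset D) && (#|dset (xs ord0) y| == halfup #|D|)
    then ('C(#|D|, halfup #|D|))%:R^-1 else 0.

Lemma op_compl_distr : is_distr_op op_compl.
Proof.
move=> xs; split.
  by move=> y; rewrite /op_compl; case: ifP.
rewrite (bigD1 (compl (xs ord0))) //= /op_compl eqxx big1 ?addr0 //.
by move=> y /negbTE ->.
Qed.

Lemma op_compl_unbiased : unbiased_op op_compl.
Proof.
split.
- move=> xs y z; rewrite /op_compl ffunE compl_xor.
  by rewrite (inj_eq (@bxor_inj z)).
- move=> xs y s; rewrite /op_compl ffunE compl_perm.
  by rewrite (inj_eq (@bperm_inj s)).
Qed.

Lemma halfup_le e : (halfup e <= e)%N.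
Proof. rewrite /halfup; have h := odd_double_half e.+1; rewrite -muln2 in h; case: (odd _) h => /= h; lia. Qed.

Lemma op_half_distr : is_distr_op op_half.
Proof.
move=> xs; split.
  by move=> y; rewrite /op_half; case: ifP => // _.
set x := xs ord0; set D := dset x (xs ord_max).
rewrite /op_half -/x -/D.
rewrite -big_mkcond /= sumr_const.
have -> : #|[pred y | (dset x y \subset D) && (#|dset x y| == halfup #|D|)]|
    = 'C(#|D|, halfup #|D|).
  have := card_dset x (fun G => (G \subset D) && (#|G| == halfup #|D|)).
  rewrite cards_draws => <-; apply: eq_card => y; rewrite !inE //.
rewrite /halfup -uphalfE -[LHS]mulr_natr mulVf // pnatr_eq0 -lt0n bin_gt0 uphalfE.
exact: halfup_le.
Qed.

Lemma op_half_unbiased : unbiased_op op_half.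
Proof.
split.
- move=> xs y z; rewrite /op_half !ffunE !dset_xor //.
- move=> xs y s; rewrite /op_half !ffunE !dset_perm preim_perm_subset.
  by rewrite !card_preim_perm.
Qed.

End Ops.

Lemma half_eq i l : (i./2 == l) = (i == l.*2) || (i == l.*2.+1).
Proof.
have h := odd_double_half i; rewrite -!muln2 in h.
apply/eqP/orP.
- move=> e; case: (odd i) h => /= h; [right|left]; apply/eqP; rewrite -muln2; lia.
- by case=> /eqP ->; rewrite ?doubleK // (half_bit_double l true).
Qed.

Section Blocks.
Variable n : nat.
Hypothesis n_even : ~~ odd n.
Implicit Types x y : bits n.

Lemma good_iff x l : (l < n./2)%N ->
  good x l = [forall i : 'I_n, (i./2 == l) ==> x i].
Proof.
move=> hl; have h2 := n_half n_even.
have i1 : (l.*2 < n)%N by rewrite -muln2 in h2 *; lia.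
have i2 : (l.*2.+1 < n)%N by rewrite -muln2 in h2 *; lia.
rewrite /good; have -> : bitn x l.*2 = bitn x (Ordinal i1) by [].
have -> : bitn x l.*2.+1 = bitn x (Ordinal i2) by [].
rewrite !bitnE; apply/andP/forallP.
- case=> a b i; apply/implyP; rewrite half_eq => /orP[] /eqP e.
  + by have -> : i = Ordinal i1 by apply: val_inj.
  + by have -> : i = Ordinal i2 by apply: val_inj.
- move=> h; split.
  + by have := h (Ordinal i1); rewrite /= doubleK eqxx.
  + have e : (l.*2.+1)./2 == l by rewrite (half_bit_double l true).
    by have := h (Ordinal i2); rewrite /= e.
Qed.

Lemma prefix_true x (i : 'I_n) : (i./2 < first_bad_block x)%N -> x i.
Proof.
move=> h; have := fbb_good h; rewrite good_iff.
  by move/forallP/(_ i); rewrite eqxx.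
by apply: leq_trans h (fbb_le x).
Qed.

Definition Zset x : {set 'I_n} := [set i : 'I_n | (i./2 == first_bad_block x) && ~~ x i].
Definition blk (l : nat) : {set 'I_n} := [set i : 'I_n | i./2 == l].
Definition zsz (v : nat) : nat := if odd v then 2 else 1.

Lemma card_blk l : (#|blk l| <= 2)%N.
Proof.
have inj : {in blk l &, injective (fun i : 'I_n => odd i)}.
  move=> i j; rewrite !inE => /eqP hi /eqP hj e; apply: val_inj => /=.
  by rewrite -(odd_double_half i) -(odd_double_half j) e hi hj.
rewrite -(card_in_imset inj).
by apply: leq_trans (max_card _) _; rewrite card_bool.
Qed.

Lemma Zset_blk x : Zset x \subset blk (first_bad_block x).
Proof. by apply/fintype.subsetP => i; rewrite !inE => /andP[]. Qed.

Lemma nonopt_fbb x : (exists i, ~~ x i) -> (first_bad_block x < n./2)%N.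
Proof. by case=> i hi; apply: (fbb_lt_exists n_even hi). Qed.

Lemma cardZ x : (exists i, ~~ x i) -> #|Zset x| = zsz (DLB x).
Proof.
move=> hx; have hl := nonopt_fbb hx; set l := first_bad_block x in hl *.
have h2 := n_half n_even.
have i1 : (l.*2 < n)%N by rewrite -muln2 in h2 *; lia.
have i2 : (l.*2.+1 < n)%N by rewrite -muln2 in h2 *; lia.
pose a := Ordinal i1; pose b := Ordinal i2.
have hZ : Zset x = [set i | ((i == a) || (i == b)) && ~~ x i].
  apply/setP => i; rewrite !inE half_eq; congr (_ && _).
have hbad := fbb_bad hl; rewrite -/l in hbad.
have hodd := DLB_odd hl; rewrite -/l in hodd.
have ab : a != b by rewrite -val_eqE /= neq_ltn ltnSn.
move: hbad hodd; rewrite /zsz /good.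
have -> : bitn x l.*2 = bitn x a by [].
have -> : bitn x l.*2.+1 = bitn x b by [].
rewrite !bitnE => hbad ->.
have ba : b != a by rewrite eq_sym.
have key : forall i, i \in Zset x = ((i == a) && ~~ x a) || ((i == b) && ~~ x b).
  move=> i; rewrite hZ !inE.
  case: (eqVneq i a) => [->|ia]; first by rewrite (negbTE ab) /= ?orbF.
  case: (eqVneq i b) => [->|ib]; first by [].
  by [].
move: hbad; case ea: (x a); case eb: (x b) => //= _.
- have -> : Zset x = [set b] by apply/setP => i; rewrite key inE ea eb /= ?andbF ?andbT ?orbF.
  by rewrite cards1.
- have -> : Zset x = [set a] by apply/setP => i; rewrite key inE ea eb /= ?andbF ?andbT ?orbF.
  by rewrite cards1.
- have -> : Zset x = [set a; b] by apply/setP => i; rewrite key !inE ea eb /= ?andbT.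
  by rewrite cards2 ab.
Qed.

Lemma acceptE x (G : {set 'I_n}) : (exists i, ~~ x i) ->
  (forall i : 'I_n, (i./2 < first_bad_block x)%N -> i \notin G) ->
  (first_bad_block x < first_bad_block (flipset x G))%N =
  [forall i : 'I_n, (i./2 == first_bad_block x) ==> (x i (+) (i \in G))].
Proof.
move=> hx hG; have hl := nonopt_fbb hx; set l := first_bad_block x in hl hG *.
set z := flipset x G.
apply/idP/forallP.
- move=> hlt i; apply/implyP => /eqP hi.
  have := fbb_good hlt; rewrite good_iff // => /forallP /(_ i).
  by rewrite hi eqxx ffunE.
- move=> h; apply: fbb_ge => //.
  move=> j hj; have hjn : (j < n./2)%N by lia.
  rewrite good_iff //; apply/forallP => i; apply/implyP => /eqP hi.
  rewrite ffunE; case: (ltnP j l) => hjl.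
  + by rewrite (negbTE (hG i _)) ?hi // addbF; apply: prefix_true; rewrite hi.
  + have ejl : j = l by lia.
    by have := h i; rewrite hi ejl eqxx.
Qed.

End Blocks.

Section TupleSum.
Variables (T : finType) (V : nmodType).
Local Open Scope ring_scope.

Lemma sum_tuple_rcons t (F : seq T -> V) :
  \sum_(u : t.+2.-tuple T) F u = \sum_(xs : t.+1.-tuple T) \sum_(y : T) F (rcons xs y).
Proof.
rewrite pair_bigA /=.
pose f (p : t.+1.-tuple T * T) : t.+2.-tuple T := [tuple of rcons p.1 p.2].
pose g (u : t.+2.-tuple T) : t.+1.-tuple T * T :=
  ([tuple of belast (thead u) (behead u)], last (thead u) (behead u)).
rewrite (reindex f) /=; last first.
  exists g => [[xs y] _ | u _].
  - case: xs => -[|x s] //= hs; congr pair; first apply: val_inj => /=.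
    + by rewrite /thead (tnth_nth x) /= belast_rcons.
    + by rewrite /thead (tnth_nth x) /= last_rcons.
  - apply: val_inj => /=; rewrite -lastI.
    by rewrite [in RHS](tuple_eta u).
by apply: eq_bigr.
Qed.

End TupleSum.

Section Drift.
Variables (R : realType) (n k : nat) (A : algo R n k).
Local Open Scope ring_scope.

Definition nonopt_all (xs : seq (bits n)) := all (fun x => ~~ is_opt x) xs.

Lemma take_rcons' (T : Type) (s : seq T) x m : (m <= size s)%N ->
  take m (rcons s x) = take m s.
Proof. by move=> h; rewrite -cats1 takel_cat. Qed.

Lemma hist_prob_rcons xs y : xs != [::] ->
  hist_prob A (rcons xs y) = hist_prob A xs * step_prob A xs y.
Proof.
case: xs => [//|x xs] _.
rewrite /hist_prob rcons_cons /= size_rcons big_nat_recr //= -mulrA.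
congr (_ * _); congr (_ * _).
- apply: eq_big_nat => s /andP[_ hs].
  have hs' : (s <= (size xs).+1)%N by apply: ltnW.
  by rewrite -rcons_cons take_rcons' // nth_rcons hs.
- by rewrite nth_rcons ltnn eqxx -cats1 takel_cat // take_size.
Qed.

Hypothesis HA : unbiased_algo A.

Lemma step_prob_ge0 xs y : 0 <= step_prob A xs y.
Proof.
rewrite /step_prob; case: (HA [seq DLB x | x <- xs]) => hd _.
by case: (hd [ffun j => nth y xs ((A [seq DLB x | x <- xs]).2 j)]) => h _; apply: h.
Qed.

Lemma hist_prob_ge0 xs : 0 <= hist_prob A xs.
Proof.
case: xs => [|x xs] /=; first exact: ler01.
apply: mulr_ge0; first by rewrite invr_ge0 exprn_ge0 // ler0n.
by apply: prodr_ge0 => s _; apply: step_prob_ge0.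
Qed.

Lemma sum_step_prob xs : xs != [::] -> \sum_y step_prob A xs y = 1.
Proof.
case: xs => [//|x0 xs'] _; set xs := x0 :: xs'.
have [hd [_ hidx]] := HA [seq DLB x | x <- xs].
have hsz : (0 < size [seq DLB x | x <- xs])%N by rewrite size_map.
have e : forall y, step_prob A xs y =
    (A [seq DLB x | x <- xs]).1 [ffun j => nth x0 xs ((A [seq DLB x | x <- xs]).2 j)] y.
  move=> y; rewrite /step_prob; congr (_ _ _); apply/ffunP => j; rewrite !ffunE.
  apply: set_nth_default; have := hidx hsz j; by rewrite size_map.
under eq_bigr do rewrite e.
by case: (hd [ffun j => nth x0 xs ((A [seq DLB x | x <- xs]).2 j)]).
Qed.

Variables (Inv : seq (bits n) -> Prop) (Phi : seq (bits n) -> R) (M : R).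
Hypothesis H_init : forall x, Inv [:: x].
Hypothesis H_pres : forall xs y, xs != [::] -> Inv xs -> nonopt_all (rcons xs y) ->
  step_prob A xs y != 0 -> Inv (rcons xs y).
Hypothesis H_drift : forall xs, xs != [::] -> Inv xs -> nonopt_all xs ->
  \sum_y step_prob A xs y * Phi (rcons xs y) <= Phi xs - 1.
Hypothesis H_pos : forall xs, 0 <= Phi xs.
Hypothesis H_M : forall x, Phi [:: x] <= M.

Lemma supp_inv xs : xs != [::] -> hist_prob A xs != 0 -> nonopt_all xs -> Inv xs.
Proof.
elim/last_ind: xs => [//|xs y IH] _.
case: (eqVneq xs [::]) => [->|hxs]; first by move=> _ _; apply: H_init.
rewrite hist_prob_rcons // mulf_eq0 negb_or => /andP[h1 h2] hna.
apply: H_pres => //; apply: IH => //.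
by move: hna; rewrite /nonopt_all all_rcons => /andP[].
Qed.

Definition Ssum t := \sum_(u : t.+1.-tuple (bits n))
  (if nonopt_all u then hist_prob A u * Phi u else 0).

Lemma prob_runtime_gtE t : prob_runtime_gt A t =
  \sum_(u : t.+1.-tuple (bits n)) (if nonopt_all u then hist_prob A u else 0).
Proof. by rewrite /prob_runtime_gt big_mkcond. Qed.

Lemma Ssum_step t : Ssum t.+1 + prob_runtime_gt A t <= Ssum t.
Proof.
rewrite /Ssum prob_runtime_gtE (sum_tuple_rcons _ (fun u =>
  if nonopt_all u then hist_prob A u * Phi u else 0)) -big_split /=.
apply: ler_sum => xs _.
have hxs : (xs : seq _) != [::] by case: xs => -[].
case hna: (nonopt_all xs); last first.
  rewrite addr0; apply: sumr_le0 => y _.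
  by rewrite /nonopt_all all_rcons; move: hna; rewrite /nonopt_all => ->; rewrite andbF.
have e : forall y, (if nonopt_all (rcons xs y) then
    hist_prob A (rcons xs y) * Phi (rcons xs y) else 0) <=
    hist_prob A xs * (step_prob A xs y * Phi (rcons xs y)).
  move=> y; rewrite hist_prob_rcons // -mulrA; case: ifP => // _.
  by apply: mulr_ge0; [apply: hist_prob_ge0 | apply: mulr_ge0; [apply: step_prob_ge0|]].
apply: le_trans (lerD (ler_sum _ (fun y _ => e y)) (lexx _)) _.
rewrite -mulr_sumr.
case: (eqVneq (hist_prob A xs) 0) => [->|hne]; first by rewrite !mul0r addr0.
have hI : Inv xs by apply: supp_inv.
have := H_drift hxs hI hna => hd.
have := ler_wpM2l (hist_prob_ge0 xs) hd.
rewrite mulrBr mulr1 => h; lra.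
Qed.

Lemma Ssum_ge0 t : 0 <= Ssum t.
Proof.
apply: sumr_ge0 => u _; case: ifP => // _.
by apply: mulr_ge0; [apply: hist_prob_ge0 | apply: H_pos].
Qed.

Lemma Ssum0 : Ssum 0 <= M.
Proof.
rewrite /Ssum.
have e : forall u : 1.-tuple (bits n), (if nonopt_all u then hist_prob A u * Phi u else 0)
    <= (2 ^+ n)^-1 * M.
  case/tupleP => x u; rewrite tuple0 /=.
  have hp : hist_prob A [:: x] = (2 ^+ n)^-1 by rewrite /hist_prob /= big_nil mulr1.
  have h0 : 0 <= M by apply: le_trans (H_pos [:: x]) (H_M x).
  have h2 : 0 <= ((2:R) ^+ n)^-1 by rewrite invr_ge0 exprn_ge0 // ler0n.
  case: ifP => _; last by apply: mulr_ge0.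
  by rewrite big_geq // mulr1; apply: ler_wpM2l => //; apply: H_M.
apply: le_trans (ler_sum _ (fun u _ => e u)) _.
rewrite sumr_const card_tuple card_ffun card_bool card_ord.
rewrite expn1 -mulrnAl -[_ *+ _]mulr_natr natrX mulVf ?mul1r // expf_neq0 // pnatr_eq0.
Qed.

Lemma partial_bound K : \sum_(0 <= t < K) prob_runtime_gt A t <= M.
Proof.
suff : \sum_(0 <= t < K) prob_runtime_gt A t + Ssum K <= Ssum 0.
  by move=> h; have := Ssum_ge0 K; have := Ssum0; lra.
elim: K => [|K IH]; first by rewrite big_geq // add0r.
rewrite big_nat_recr //=; have := Ssum_step K; lra.
Qed.

Lemma prob_runtime_gt_ge0 t : 0 <= prob_runtime_gt A t.
Proof. by apply: sumr_ge0 => u _; apply: hist_prob_ge0. Qed.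

Lemma expected_runtime_le : (expected_runtime A <= M%:E)%E.
Proof.
rewrite /expected_runtime.
have hge : forall t, (0 <= t)%N -> true -> (0 <= (prob_runtime_gt A t)%:E)%E.
  by move=> t _ _; rewrite lee_fin prob_runtime_gt_ge0.
apply: (lime_le (is_cvg_nneseries hge)); apply: nearW => K.
by rewrite sumEFin lee_fin partial_bound.
Qed.

End Drift.

Inductive st := Start | Init1 of nat | Srch of nat & nat & nat & nat & nat & nat & nat.

Definition stepst (n t v : nat) (sg : st) : st :=
  match sg with
  | Start => Init1 v
  | Init1 v0 => if (v0 <= v)%N then Srch 0 v0 1 v 1 n n else Srch 1 v 0 v0 0 n n
  | Srch w fw o fo s d e =>
     if (fw./2 < v./2)%N then
       if halfup e == zsz fw then
         if (v <= fo)%N then Srch t v o fo o (d - zsz fw) (d - zsz fw)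
         else Srch o fo t v t (d - zsz fw) (d - zsz fw)
       else Srch w fw o fo t d (halfup e)
     else sg
  end.

Definition run (n : nat) (h : seq nat) : nat * st :=
  foldl (fun p v => (p.1.+1, stepst n p.1 v p.2)) (0%N, Start) h.

Lemma run_rcons n h v : run n (rcons h v) =
  ((run n h).1.+1, stepst n (run n h).1 v (run n h).2).
Proof. by rewrite /run foldl_rcons. Qed.

Lemma run_size n h : (run n h).1 = size h.
Proof. by elim/last_ind: h => [//|h v IH]; rewrite run_rcons /= IH size_rcons. Qed.

Definition stb (p : nat * st) : bool :=
  match p.2 with
  | Start => true
  | Init1 _ => (1 <= p.1)%N
  | Srch w _ o _ s _ _ => [&& (w < p.1)%N, (o < p.1)%N & (s < p.1)%N]
  end.

Lemma run_stb n h : stb (run n h).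
Proof.
elim/last_ind: h => [//|h v IH]; rewrite run_rcons /stb /=.
move: IH; rewrite /stb; case: (run n h) => t sg /=.
case: sg => [|v0|w fw o fo s d e] /=.
- by [].
- by move=> ht; case: ifP => _ /=; lia.
- move=> /and3P[h1 h2 h3]; case: ifP => _ /=; last by lia.
  case: ifP => _; last by lia.
  by case: ifP => _ /=; lia.
Qed.

Section Alg.
Variables (R : realType) (n : nat).

Definition alg : algo R n 2 := fun h =>
  match (run n h).2 with
  | Srch w _ _ _ s _ _ => (@op_half n R, fun j : 'I_2 => if val j == 0%N then w else s)
  | _ => (@op_compl n R, fun _ => 0%N)
  end.

Lemma alg_unbiased : unbiased_algo alg.
Proof.
move=> h; rewrite /alg; have := run_stb n h; rewrite /stb run_size.
case: (run n h) => t sg /=; case: sg => [|v0|w fw o fo s d e] /=.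
- by move=> _; split; [apply: op_compl_distr | split; [apply: op_compl_unbiased | by []]].
- by move=> _; split; [apply: op_compl_distr | split; [apply: op_compl_unbiased | by []]].
- move=> /and3P[h1 h2 h3]; split; first exact: op_half_distr.
  split; first exact: op_half_unbiased.
  by move=> _ j; case: ifP.
Qed.

End Alg.

Section Inv.
Variables (R : realType) (n : nat).
Hypothesis n_even : ~~ odd n.
Implicit Types (xs : seq (bits n)) (x y : bits n).

Definition def : bits n := [ffun _ => false].

Record SInv xs (w fw o fo s d e : nat) : Prop := {
  si_w : (w < size xs)%N;
  si_o : (o < size xs)%N;
  si_s : (s < size xs)%N;
  si_fw : fw = DLB (nth def xs w);
  si_fo : fo = DLB (nth def xs o);
  si_le : (fw <= fo)%N;
  si_agree : forall i, nth def xs w i = nth def xs o i -> nth def xs w i;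
  si_d : #|dset (nth def xs w) (nth def xs o)| = d;
  si_ED : dset (nth def xs w) (nth def xs s) \subset dset (nth def xs w) (nth def xs o);
  si_e : #|dset (nth def xs w) (nth def xs s)| = e;
  si_ZE : Zset (nth def xs w) \subset dset (nth def xs w) (nth def xs s);
  si_ze : (zsz fw < e)%N \/ dset (nth def xs w) (nth def xs s) = dset (nth def xs w) (nth def xs o)
}.

Definition Inv xs : Prop :=
  match (run n ([seq DLB x | x <- xs])).2 with
  | Start => False
  | Init1 v0 => exists x, xs = [:: x] /\ v0 = DLB x
  | Srch w fw o fo s d e => SInv xs w fw o fo s d e
  end.

Definition L := up_log 2 n.

Definition pot (sg : st) : nat :=
  match sg with
  | Srch _ _ _ _ _ d e => 8 * ((L + 1) * d + up_log 2 e)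
  | _ => 8 * ((L + 1) * n + L) + 1
  end.

Definition Phi xs : R := ((pot (run n ([seq DLB x | x <- xs])).2)%:R)%R.

Lemma run_map_rcons xs y : run n ([seq DLB x | x <- rcons xs y]) =
  ((size xs).+1, stepst n (size xs) (DLB y) (run n ([seq DLB x | x <- xs])).2).
Proof. by rewrite map_rcons run_rcons run_size size_map. Qed.

Lemma nth_rcons_old xs y i : (i < size xs)%N -> nth def (rcons xs y) i = nth def xs i.
Proof. by move=> h; rewrite nth_rcons h. Qed.

Lemma nth_rcons_new xs y : nth def (rcons xs y) (size xs) = y.
Proof. by rewrite nth_rcons ltnn eqxx. Qed.

Lemma nonopt_nth xs i : nonopt_all xs -> (i < size xs)%N -> exists j, ~~ (nth def xs i) j.
Proof.
move=> /allP h hi; have := h _ (mem_nth def hi).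
rewrite is_optE // negb_forall => /existsP[j hj]; by exists j.
Qed.

Lemma agree_sym x y : (forall i, x i = y i -> x i) -> forall i, y i = x i -> y i.
Proof. by move=> h i e; rewrite e; apply: h. Qed.

Lemma dset_sym x y : dset x y = dset y x.
Proof. by apply/setP => i; rewrite !inE eq_sym. Qed.

Lemma Z_sub_dset x y : (forall i, x i = y i -> x i) -> Zset x \subset dset x y.
Proof.
move=> h; apply/fintype.subsetP => i; rewrite !inE => /andP[_ hi].
by apply/eqP => e; move: (h i e); rewrite (negbTE hi).
Qed.

Lemma step_prob_srch xs y w fw o fo s d e :
  (run n ([seq DLB x | x <- xs])).2 = Srch w fw o fo s d e -> (w < size xs)%N -> (s < size xs)%N ->
  step_prob (alg R n) xs y =
  let W := nth def xs w in let E := dset W (nth def xs s) in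
  if (dset W y \subset E) && (#|dset W y| == halfup #|E|)
  then (('C(#|E|, halfup #|E|))%:R^-1)%R else 0%R.
Proof.
move=> hr hw hs; rewrite /step_prob /alg hr /= /op_half !ffunE /=.
by rewrite !(set_nth_default def y).
Qed.

Lemma step_prob_init xs y v0 :
  (run n ([seq DLB x | x <- xs])).2 = Init1 v0 -> xs != [::] ->
  step_prob (alg R n) xs y = if y == compl (nth def xs 0) then 1%R else 0%R.
Proof.
move=> hr hne; rewrite /step_prob /alg hr /= /op_compl !ffunE /=.
by rewrite (set_nth_default def y) // lt0n size_eq0.
Qed.

End Inv.

Lemma uplog_halfup e : (2 <= e)%N -> (up_log 2 (halfup e) < up_log 2 e)%N.
Proof.
move=> he; set u := up_log 2 e.
have u0 : (0 < u)%N by rewrite /u up_log_gt0 /=.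
have hu : (e <= 2 ^ u)%N by apply: up_logP.
have e2 : 2 ^ u = 2 * 2 ^ u.-1 by rewrite -expnS prednK.
have hk := halfup_bounds e; rewrite -muln2 in hk.
have : (up_log 2 (halfup e) <= u.-1)%N.
  apply: up_log_min => //; rewrite /halfup; move: hk hu; rewrite e2; lia.
lia.
Qed.

Section Pres.
Variables (R : realType) (n : nat).
Hypothesis n_even : ~~ odd n.
Implicit Types (xs : seq (bits n)) (x y : bits n).
Local Notation def := (def n).

Definition blockok x (G : {set 'I_n}) :=
  [forall i : 'I_n, (i./2 == first_bad_block x) ==> (x i (+) (i \in G))].

Lemma SInv_pair xs a b : (a < size xs)%N -> (b < size xs)%N ->
  (DLB (nth def xs a) <= DLB (nth def xs b))%N ->
  (forall i, nth def xs a i = nth def xs b i -> nth def xs a i) ->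
  SInv xs a (DLB (nth def xs a)) b (DLB (nth def xs b)) b
    #|dset (nth def xs a) (nth def xs b)| #|dset (nth def xs a) (nth def xs b)|.
Proof.
move=> ha hb hle hag; constructor => //.
- exact: Z_sub_dset.
- by right.
Qed.

Lemma SInv_rcons xs y w fw o fo s d e : SInv xs w fw o fo s d e ->
  SInv (rcons xs y) w fw o fo s d e.
Proof.
case=> hw ho hs hfw hfo hle hag hd hED he hZE hze.
have sz : (size xs <= size (rcons xs y))%N by rewrite size_rcons.
by constructor; rewrite ?nth_rcons_old //; apply: leq_trans sz.
Qed.

Lemma Inv_init x : Inv [:: x].
Proof. by rewrite /Inv /=; exists x. Qed.

Lemma count_ok x (E : {set 'I_n}) k : Zset x \subset E -> (#|Zset x| <= k)%N ->
  ('C(#|E| - 2, k - #|Zset x|) <=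
   #|[set G : {set 'I_n} | (G \subset E) && (#|G| == k) && blockok x G]|)%N.
Proof.
move=> hZE hzk.
set l := first_bad_block x.
set B := blk n l.
have hZB : Zset x \subset B by apply: Zset_blk.
have h1 : (#|E| - 2 <= #|E :\: B|)%N.
  rewrite cardsD; have := card_blk n l; rewrite -/B => hb.
  have := subset_leq_card (@subsetIr _ E B); lia.
apply: leq_trans (leq_bin2l _ h1) _.
rewrite -cards_draws.
pose f (G' : {set 'I_n}) := G' :|: Zset x.
set dom := [set A : {set 'I_n} | (A \subset E :\: B) && (#|A| == k - #|Zset x|)].
have disj : forall G', G' \in dom -> G' :&: Zset x = finset.set0.
  move=> G'; rewrite inE => /andP[hG' _]; apply/setP => i; rewrite !inE.
  apply/negP => /andP[hi hz].
  have := fintype.subsetP hG' i hi; rewrite !inE => /andP[hnb _].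
  by have := fintype.subsetP hZB i; rewrite !inE hz (negbTE hnb) => /(_ isT).
have inj : {in dom &, injective f}.
  move=> G1 G2 h1' h2' e'; apply/setP => i.
  have key : forall G', G' \in dom -> (i \in G') = (i \in f G') && (i \notin B).
    move=> G' hG'; rewrite /f inE.
    case hi: (i \in G') => /=.
      move: hG'; rewrite inE => /andP[/fintype.subsetP /(_ i hi)].
      by rewrite !inE => /andP[-> _].
    case hz: (i \in Zset x) => //=.
    by have := fintype.subsetP hZB i hz => ->.
  by rewrite (key _ h1') (key _ h2') e'.
rewrite -(card_in_imset inj); apply: subset_leq_card.
apply/fintype.subsetP => G /imsetP[G' hG' ->].
rewrite inE; have hG'2 := hG'; move: hG'2; rewrite inE => /andP[hsub /eqP hcard].
apply/andP; split; [apply/andP; split|].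
- rewrite /f finset.subUset hZE andbT.
  apply: fintype.subset_trans hsub _; exact: subsetDl.
- rewrite /f cardsU (disj _ hG') cards0 subn0 hcard subnK //.
- apply/forallP => i; apply/implyP => /eqP hi.
  have hiB : i \in B by rewrite inE hi.
  have hiG' : i \notin G'.
    apply/negP => /(fintype.subsetP hsub); rewrite !inE => /andP[+ _].
    by move: hiB; rewrite inE => ->.
  rewrite /f inE (negbTE hiG') /= inE hi eqxx /=.
  by case: (x i).
Qed.

Section SrchCtx.
Variables (xs : seq (bits n)) (w fw o fo s d e : nat).
Hypothesis hI : SInv xs w fw o fo s d e.
Hypothesis hna : nonopt_all xs.
Let W := nth def xs w.
Let O := nth def xs o.
Let S := nth def xs s.

Lemma ctx_W : exists j, ~~ W j.
Proof. by apply: nonopt_nth => //; case: hI. Qed.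

Lemma ctx_O : exists j, ~~ O j.
Proof. by apply: nonopt_nth => //; case: hI. Qed.

Lemma ctx_Z : #|Zset W| = zsz fw.
Proof. by rewrite (cardZ n_even ctx_W); case: hI => _ _ _ ->. Qed.

Lemma ctx_pre (i : 'I_n) : (i./2 < first_bad_block W)%N -> i \notin dset W O.
Proof.
move=> h; have hWi := prefix_true n_even h.
have hfb : (first_bad_block W <= first_bad_block O)%N.
  rewrite -!(DLB_half n_even); apply: half_leq.
  by case: hI => _ _ _ <- <-.
have hOi : O i by apply: (prefix_true n_even); apply: leq_trans h hfb.
by rewrite inE hWi hOi.
Qed.

Lemma ctx_acc (G : {set 'I_n}) : G \subset dset W O ->
  (fw./2 < (DLB (flipset W G))./2)%N = blockok W G.
Proof.
move=> hG; case: hI => _ _ _ -> _ _ _ _ _ _ _ _.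
rewrite !(DLB_half n_even) -/W; apply: (acceptE n_even ctx_W) => i hi.
by apply/negP => /(fintype.subsetP hG); apply/negP; apply: ctx_pre.
Qed.

Lemma ctx_blockZ (G : {set 'I_n}) : blockok W G -> Zset W \subset G.
Proof.
move=> /forallP h; apply/fintype.subsetP => i; rewrite inE => /andP[hi hw].
by have := h i; rewrite hi /= (negbTE hw).
Qed.

Lemma ctx_ze : (zsz fw < e)%N.
Proof.
case: hI => _ _ _ _ _ _ hag _ _ he hZE [//|hED].
case: (ltnP (zsz fw) e) => // hle; exfalso.
have hZ := ctx_Z.
have eZ : Zset W = dset W S.
  apply/eqP; rewrite eqEcard hZE /= he hZ //.
have [j hj] := ctx_O.
case hD: (j \in dset W O).
- have hZj : j \in Zset W by rewrite eZ hED.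
  move: hZj hD hj; rewrite !inE => /andP[_].
  by rewrite /O /W; case: (nth def xs w j); case: (nth def xs o j).
- move: hD; rewrite inE => /negbFE/eqP e'.
  by have := hag j e'; rewrite e' => hOj; rewrite hOj in hj.
Qed.

Lemma pres_srch y : (run n [seq DLB x | x <- xs]).2 = Srch w fw o fo s d e ->
  dset W y \subset dset W S -> #|dset W y| = halfup e -> Inv (rcons xs y).
Proof.
move=> hr hGE hGk.
have [hw ho hs hfw hfo hle hag hd hED he hZE hze] := hI.
rewrite -/W -/O -/S in hfw hfo hag hd hED he hZE hze.
move: hGE hGk; move Gdef : (dset W y) => G hGE hGk.
have hy : y = flipset W G by rewrite -Gdef flip_dset.
have szr : (size xs < size (rcons xs y))%N by rewrite size_rcons.
rewrite /Inv run_map_rcons hr /=.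
case: ifP => hacc; last exact: SInv_rcons.
have hGD : G \subset dset W O := fintype.subset_trans hGE hED.
have hbo : blockok W G by rewrite -(ctx_acc hGD) -hy.
have hZG := ctx_blockZ hbo.
case: ifP => hk.
- have hk' : halfup e = zsz fw by apply/eqP.
  have eG : G = Zset W.
    by apply/eqP; rewrite eq_sym eqEcard hZG hGk hk' ctx_Z leqnn.
  have hZD : Zset W \subset dset W O := fintype.subset_trans hZE hED.
  have hagy : forall i, y i = O i -> y i.
    move=> i; rewrite hy ffunE; case hi: (i \in G).
    + by move: hi; rewrite eG inE => /andP[_ /negbTE ->].
    + by rewrite addbF; apply: hag.
  have hdy : dset y O = dset W O :\: Zset W.
    apply/setP => i; rewrite -eG hy !inE ffunE.
    case hi: (i \in G) => /=; last by rewrite addbF.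
    have hiD : i \in dset W O by apply: (fintype.subsetP hGD).
    move: hiD hi; rewrite eG !inE => hne /andP[_ hwi].
    by move: hne hwi; case: (W i); case: (O i).
  have hcard : #|dset y O| = d - zsz fw.
    by rewrite hdy cardsD (finset.setIidPr hZD) hd ctx_Z.
  have hyn : nth def (rcons xs y) (size xs) = y by apply: nth_rcons_new.
  have hon : nth def (rcons xs y) o = O by apply: nth_rcons_old.
  case: ifP => hle2.
  + have := @SInv_pair (rcons xs y) (size xs) o szr (leq_trans ho (ltnW szr)).
    rewrite hyn hon -hfo hcard; apply => //.
  + have := @SInv_pair (rcons xs y) o (size xs) (leq_trans ho (ltnW szr)) szr.
    rewrite hyn hon -hfo dset_sym hcard; apply.
      by apply: ltnW; rewrite ltnNge hle2.
    exact: agree_sym.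
- have hwn : nth def (rcons xs y) w = W by apply: nth_rcons_old.
  have hon : nth def (rcons xs y) o = O by apply: nth_rcons_old.
  have hyn : nth def (rcons xs y) (size xs) = y by apply: nth_rcons_new.
  constructor; rewrite ?hwn ?hon ?hyn ?Gdef //; try by apply: leq_trans (ltnW szr).
  left; rewrite ltn_neqAle eq_sym hk /= -ctx_Z uphalfE; rewrite /halfup in hGk; rewrite -hGk.
  exact: subset_leq_card.
Qed.

Lemma zsz_bounds v : (1 <= zsz v <= 2)%N.
Proof. by rewrite /zsz; case: ifP. Qed.

Lemma ctx_zd : (zsz fw <= d)%N.
Proof.
have [_ _ _ _ _ _ _ hd hED _ hZE _] := hI.
rewrite -ctx_Z -hd; apply: subset_leq_card; exact: fintype.subset_trans hZE hED.
Qed.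

Lemma ctx_dn : (d <= n)%N.
Proof.
have [_ _ _ _ _ _ _ hd _ _ _ _] := hI.
by rewrite -hd; apply: leq_trans (max_card _) _; rewrite card_ord.
Qed.

Lemma pot_step y : dset W y \subset dset W S -> #|dset W y| = halfup e ->
  (pot n (stepst n (size xs) (DLB y) (Srch w fw o fo s d e))
    + 8 * (fw./2 < (DLB y)./2) <= pot n (Srch w fw o fo s d e))%N.
Proof.
move=> hGE hGk.
have hz := zsz_bounds fw; have hze := ctx_ze; have hzd := ctx_zd; have hdn := ctx_dn.
rewrite /stepst; case: ifP => hacc /=; last by rewrite addn0.
case: ifP => hk.
- have hd' : (up_log 2 (d - zsz fw) <= L n)%N by apply: leq_up_log; lia.
  have hm : ((L n + 1) * (d - zsz fw) + (L n + 1) <= (L n + 1) * d)%N.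
    rewrite -mulnSr; apply: leq_mul => //; lia.
  case: ifP => _ /=; lia.
- have h2e : (2 <= e)%N by lia.
  have := uplog_halfup h2e; rewrite /pot /halfup -uphalfE; lia.
Qed.

Lemma drift_srch : (run n [seq DLB x | x <- xs]).2 = Srch w fw o fo s d e ->
  (\sum_y step_prob (alg R n) xs y * Phi R (rcons xs y) <= Phi R xs - 1)%R.
Proof.
move=> hr.
have [hw ho hs hfw hfo hle hag hd hED he hZE hze'] := hI.
rewrite -/W -/O -/S in hfw hfo hag hd hED he hZE hze'.
set P := pot n (Srch w fw o fo s d e).
have hPhi : Phi R xs = (P%:R)%R by rewrite /Phi hr.
set c := 'C(e, halfup e).
have cpos : (0 < c)%N by rewrite bin_gt0 halfup_le.
pose supp y := (dset W y \subset dset W S) && (#|dset W y| == halfup e).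
pose a y := (fw./2 < (DLB y)./2)%N.
pose X y : R := (if supp y && a y then (c%:R)^-1 else 0)%R.
have hV : forall y, step_prob (alg R n) xs y = (if supp y then (c%:R)^-1 else 0)%R.
  by move=> y; rewrite (step_prob_srch R y hr hw hs) /= -/W -/S he.
have hstep : forall y, (step_prob (alg R n) xs y * Phi R (rcons xs y)
    <= step_prob (alg R n) xs y * P%:R - 8 * X y)%R.
  move=> y; rewrite hV /X; case hsy: (supp y); last by rewrite !mul0r andFb mulr0 subr0.
  move: hsy => /andP[hGE /eqP hGk].
  have hp := pot_step hGE hGk.
  rewrite /Phi run_map_rcons hr /=.
  have cinv : (0 <= (c%:R : R)^-1)%R by rewrite invr_ge0 ler0n.
  have hp' : ((pot n (stepst n (size xs) (DLB y) (Srch w fw o fo s d e)))%:R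
      <= (P%:R : R) - 8 * (a y)%:R)%R.
    rewrite -/P in hp.
    have hp2 := hp; rewrite -(ler_nat R) natrD natrM in hp2.
    rewrite /a; lra.
  rewrite /= (_ : (8 * (if a y then (c%:R)^-1 else 0) = (c%:R)^-1 * (8 * (a y)%:R))%R);
    last by case: (a y); rewrite /= ?mulr1 ?mulr0 // mulrC.
  by rewrite -mulrBr; apply: ler_wpM2l.
apply: le_trans (ler_sum _ (fun y _ => hstep y)) _.
rewrite sumrB -mulr_suml.
have -> : (\sum_y step_prob (alg R n) xs y = 1)%R.
  apply: (sum_step_prob (alg_unbiased R n)).
  by case: (xs) hw.
rewrite mul1r hPhi -mulr_sumr.
suff : (1 <= 8 * \sum_y X y)%R by lra.
have hsum : (\sum_y X y = (c%:R)^-1 *+ #|[set y | supp y && a y]|)%R.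
  rewrite /X -big_mkcond /= sumr_const; apply: congr1; apply: eq_card => y.
  by rewrite !inE.
have hset : #|[set y | supp y && a y]| =
    #|[set G : {set 'I_n} | (G \subset dset W S) && (#|G| == halfup e) && blockok W G]|.
  rewrite -(card_dset W (fun G => (G \subset dset W S) && (#|G| == halfup e) && blockok W G)).
  apply: eq_card => y; rewrite !inE /supp /a.
  case hG: (dset W y \subset dset W S) => //=.
  case: (#|dset W y| == halfup e) => //=.
  have hGD : dset W y \subset dset W O := fintype.subset_trans hG hED.
  by rewrite -(ctx_acc hGD) flip_dset.
have hz := zsz_bounds fw; have hze := ctx_ze.
have hk := halfup_bounds e; rewrite -muln2 in hk.
have hzk : (#|Zset W| <= halfup e)%N by rewrite ctx_Z /halfup; lia.
have hcnt := count_ok hZE hzk.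
rewrite he ctx_Z in hcnt.
have hbb := binom_bound e (zsz fw) hz hze.
have hc8 : (c <= 8 * #|[set y | supp y && a y]|)%N.
  rewrite hset; apply: leq_trans hbb _; rewrite leq_mul2l /=; exact: hcnt.
rewrite hsum -[X in (_ <= 8 * X)%R]mulr_natr mulrCA mulrC.
have cR : (0 < (c%:R : R))%R by rewrite ltr0n.
rewrite ler_pdivlMr // mul1r -natrM ler_nat; exact: hc8.
Qed.

End SrchCtx.

End Pres.

Section Main.
Variables (R : realType) (n : nat).
Hypothesis n_even : ~~ odd n.
Implicit Types (xs : seq (bits n)) (x y : bits n).
Local Notation def := (def n).

Lemma dset_compl x : #|dset x (compl x)| = n.
Proof.
have -> : dset x (compl x) = [set: 'I_n].
  by apply/setP => i; rewrite !inE ffunE; case: (x i).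
by rewrite cardsT card_ord.
Qed.

Lemma init_pair x : Inv [:: x; compl x].
Proof.
rewrite /Inv /=.
have hag : forall a b : bits n, b = compl a -> forall i, a i = b i -> a i.
  by move=> a b -> i; rewrite ffunE; case: (a i).
case: ifP => hle.
- have := @SInv_pair n [:: x; compl x] 0 1 isT isT hle (hag _ _ erefl).
  by rewrite /= dset_compl.
- have hle' : (DLB (compl x) <= DLB x)%N by apply: ltnW; rewrite ltnNge hle.
  have := @SInv_pair n [:: x; compl x] 1 0 isT isT hle'.
  rewrite /= dset_sym dset_compl; apply.
  by apply: agree_sym; apply: hag.
Qed.

Lemma Inv_pres xs y : xs != [::] -> Inv xs -> nonopt_all (rcons xs y) ->
  step_prob (alg R n) xs y != 0%R -> Inv (rcons xs y).
Proof.
move=> hne; rewrite {1}/Inv; case hr: (run n [seq DLB x | x <- xs]).2 => [|v0|w fw o fo s d e]; first by [].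
- case=> x [hx hv] _; rewrite (step_prob_init R y hr hne) hx /=.
  case: (eqVneq y (compl x)) => [-> _|hy]; first exact: init_pair.
  by rewrite eqxx.
- move=> hI hna; have hna' : nonopt_all xs.
    by move: hna; rewrite /nonopt_all all_rcons => /andP[].
  have [hw _ hs _ _ _ _ _ _ he _ _] := hI.
  rewrite (step_prob_srch R y hr hw hs) /=.
  case: ifP => [/andP[hGE /eqP hGk] _|_]; last by rewrite eqxx.
  apply: (pres_srch n_even hI hna' hr hGE); by rewrite hGk he.
Qed.

Definition Mval : nat := 8 * ((L n + 1) * n + L n) + 1.

Lemma Inv_drift xs : xs != [::] -> Inv xs -> nonopt_all xs ->
  (\sum_y step_prob (alg R n) xs y * Phi R (rcons xs y) <= Phi R xs - 1)%R.
Proof.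
move=> hne; rewrite {1}/Inv; case hr: (run n [seq DLB x | x <- xs]).2 => [|v0|w fw o fo s d e]; first by [].

- case=> x [hx hv] _.
  rewrite (bigD1 (compl x)) //= big1; last first.
    by move=> y hy; rewrite (step_prob_init R y hr hne) hx /= (negbTE hy) mul0r.
  rewrite (step_prob_init R (compl x) hr hne) hx /= eqxx mul1r addr0.
  rewrite /Phi /=; case: ifP => _; rewrite /pot natrD mulr1n addrK ler_nat /L //.
- by move=> hI hna; apply: (drift_srch R n_even hI hna hr).
Qed.

Lemma expected_alg : (expected_runtime (alg R n) <= (Mval%:R : R)%:E)%E.
Proof.
have H := @expected_runtime_le R n 2 (alg R n) (alg_unbiased R n) (@Inv n) (@Phi R n) (Mval%:R)%R. apply: H.
- exact: Inv_init.
- move=> xs y hne hI hna hsp; exact: Inv_pres.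
- move=> xs hne hI hna; exact: Inv_drift.
- by move=> xs; rewrite /Phi ler0n.
- by move=> x; rewrite /Phi /=.
Qed.

End Main.

Local Open Scope ring_scope.

Lemma Mval_nat n : (3 <= n)%N -> (Mval n <= 100 * n * (L n).-1)%N.
Proof.
move=> hn; rewrite /Mval.
have hL : (2 <= L n)%N.
  rewrite /L; apply: (@leq_trans (up_log 2 3)); first by [].
  exact: leq_up_log.
nia.
Qed.

Lemma ln_L (R : realType) n : (3 <= n)%N ->
  ((L n).-1)%:R * ln (2 : R) <= ln (n%:R : R).
Proof.
move=> hn.
have hlt : (2 ^ (L n).-1 < n)%N by apply: up_log_gtn => //; lia.
have h2 : (0 : R) < 2 by [].
rewrite mulr_natl -lnXn // ler_ln ?posrE ?exprn_gt0 ?ltr0n //; last by lia.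
by rewrite -natrX ler_nat ltnW.
Qed.

Theorem theorem18 (R : realType) :
  exists (C : R) (N : nat), forall n : nat,
    (0 < n)%N -> ~~ odd n -> (N <= n)%N ->
    (unbiased_bbc R n 2 <= (C * n%:R * ln (n%:R : R))%:E)%E.
Proof.
exists (100 / ln 2), 3%N => n hn hodd hN.
have hle1 : (unbiased_bbc R n 2 <= expected_runtime (alg R n))%E.
  apply: ereal_inf_lbound; exists (alg R n) => //; exact: alg_unbiased.
apply: le_trans hle1 _; apply: le_trans (expected_alg R hodd) _.
rewrite lee_fin.
have l2 : (0 : R) < ln 2 by apply: ln_gt0; lra.
have hM := Mval_nat hN.
have hl := ln_L R hN.
apply: (@le_trans _ _ ((100 * n * (L n).-1)%N%:R)); first by rewrite ler_nat.
rewrite !natrM.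
have -> : 100 / ln 2 * n%:R * ln n%:R = 100%:R * n%:R * (ln n%:R / ln (2:R)).
  by field; rewrite gt_eqF.
apply: ler_wpM2l; first by rewrite mulr_ge0 ?ler0n.
by rewrite ler_pdivlMr.
Qed.
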